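(* For every mechanism $x_i$ for agent $i$ satisfying (P) and (IC), with indirect utility $U_i(s_i)=\mathbb E[\omega x_i(s_i,s_{-i})\mid s_i]$ on $[\underline s,\overline s]$, $$\mathbb E[x_i(s)]=-\int_{\underline s}^{\overline s}\Big\{3(1-2s_i)f(s_i)+2s_i(1-s_i)f'(s_i)\Big\}U_i(s_i)\,ds_i+2\overline s(1-\overline s)f(\overline s)U_i(\overline s)-2\underline s(1-\underline s)f(\underline s)U_i(\underline s).$$
   Context: Setup. A state $\omega\in\{-1,+1\}$ is drawn with probability $1/2$ each. There are $n\ge2$ agents. Conditional on $\omega$, signals $s_1,\dots,s_n$ are i.i.d. with distribution $\mathbb F_\omega$ on $[0,1]$, normalized so that $s_i=\mathbb P[\omega=+1\mid s_i]$; $\mathbb F_{-1},\mathbb F_{+1}$ mutually absolutely continuous with densities; $\mathbb F=(\mathbb F_{-1}+\mathbb F_{+1})/2$ has density $f$ supported on the interval $[\underline s,\overline s]\subset[0,1]$, $\underline s<\overline s$, $f$ differentiable there with continuous derivative $f'$ and $|f'/f|$ bounded. The expectation $\mathbb E[x_i(s)]$ is with respect to the (unconditional) joint distribution of $s$. A mechanism for agent $i$ is measurable $x_i:[\underline s,\overline s]^n\to[0,1]$ (probability of receiving a good worth $\omega$, else $0$). (P): $\mathbb E[\omega x_i(s_i,s_{-i})\mid s_i]\ge0$; (IC): $\mathbb E[\omega x_i(s_i,s_{-i})\mid s_i]\ge\mathbb E[\omega x_i(\hat s_i,s_{-i})\mid s_i]$, for all $s_i,\hat s_i\in[\underline s,\overline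 s]$. *)

(* Defs.v *)
From HB Require Import structures.
From mathcomp Require Import all_boot all_order all_algebra.
From mathcomp Require Import all_classical all_reals all_analysis.
Set Implicit Arguments. Unset Strict Implicit. Unset Printing Implicit Defensive.
Import Order.TTheory GRing.Theory Num.Theory.
Import numFieldNormedType.Exports.
Local Open Scope classical_set_scope.
Local Open Scope ring_scope.

Section Defs.
Variable R : realType.

Fixpoint iint (w : R -> R) (m : nat) : (m.-tuple R -> R) -> R :=
  match m return (m.-tuple R -> R) -> R with
  | 0 => fun g => g [tuple]
  | m'.+1 => fun g =>
      Rintegral lebesgue_measure setT
        (fun t => w t * iint w (fun u : m'.-tuple R => g (cons_tuple t u)))
  end.

(* E[ x(si, s_{-i}) | omega ] where, conditional on omega, the n-1 other
   signals are i.i.d. with density w = density of F_omega. *)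
Definition cond_mech (w : R -> R) (m : nat) (x : R -> m.-tuple R -> R) (si : R) : R :=
  iint w (x si).

(* E[ omega x(shat, s_{-i}) | s_i = s ] by Bayes' rule with prior 1/2 on each
   state: P[omega = +1 | s_i = s] = (1/2 fp s) / (1/2 fp s + 1/2 fm s), and
   s_{-i} independent of s_i given omega. *)
Definition interim_util (fp fm : R -> R) (m : nat) (x : R -> m.-tuple R -> R)
    (s shat : R) : R :=
  (2^-1 * fp s * cond_mech fp x shat - 2^-1 * fm s * cond_mech fm x shat)
  / (2^-1 * fp s + 2^-1 * fm s).

Definition indirect_util (fp fm : R -> R) (m : nat) (x : R -> m.-tuple R -> R)
    (s : R) : R := interim_util fp fm x s s.

(* unconditional E[ x_i(s) ] : omega = +-1 w.p. 1/2, then all n signals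
   i.i.d. with density of F_omega. *)
Definition exp_alloc (fp fm : R -> R) (m : nat) (x : R -> m.-tuple R -> R) : R :=
  2^-1 * Rintegral lebesgue_measure setT (fun si => fp si * cond_mech fp x si)
  + 2^-1 * Rintegral lebesgue_measure setT (fun si => fm si * cond_mech fm x si).

End Defs.

(* Main.v *)
Require Import Defs.
From HB Require Import structures.
From mathcomp Require Import all_boot all_order all_algebra.
From mathcomp Require Import all_classical all_reals all_analysis.
From mathcomp Require Import ring lra measurable_realfun.
Import Order.TTheory GRing.Theory Num.Theory.
Import numFieldNormedType.Exports.
Local Open Scope classical_set_scope.
Local Open Scope ring_scope.


Section Tele.
Context {R : realType}.

Lemma tele_bound (E phi : R -> R) (a b K C : R) (N : nat) : a <= b -> 0 <= K -> 0 <= C -> (0 < N)%N ->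
 (forall s t, a <= s -> s <= t -> t <= b ->
    `|E t - E s| <= K * (t - s) ^+ 2 + C * (t - s) * (phi t - phi s)) ->
 `|E b - E a| <= (K * (b - a) ^+ 2 + C * (b - a) * (phi b - phi a)) / N%:R.
Proof.
move=> ab K0 C0 N0 H.
have N0' : (0 : R) < N%:R by rewrite ltr0n.
set d := (b - a) / N%:R.
have d0 : 0 <= d by rewrite divr_ge0 // ?subr_ge0 // ltW.
pose t (k : nat) := a + k%:R * d.
have tN : t N = b by rewrite /t /d mulrC divfK ?gt_eqF // addrC subrK.
have t0 : t 0%N = a by rewrite /t mul0r addr0.
have tS k : t k.+1 - t k = d by rewrite /t -natr1 mulrDl mul1r; lra.
have tge k : a <= t k by rewrite /t lerDl mulr_ge0.
have tle k : (k <= N)%N -> t k <= b.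
  by move=> kN; rewrite -tN /t lerD2l ler_wpM2r // ler_nat.
have -> : E b - E a = \sum_(0 <= k < N) (E (t k.+1) - E (t k)).
  by rewrite telescope_sumr // tN t0.
apply: le_trans (ler_norm_sum _ _ _) _.
apply: (@le_trans _ _ (\sum_(0 <= k < N) (K * d ^+ 2 + C * d * (phi (t k.+1) - phi (t k))))).
  rewrite !big_mkord; apply: ler_sum => k _.
  rewrite -(tS k); apply: H => //; last exact: tle.
  by rewrite -subr_ge0 tS.
rewrite big_split /= -[X in _ + X <= _]mulr_sumr (telescope_sumr (fun k => phi (t k))) // tN t0.
rewrite big_mkord sumr_const card_ord.
rewrite /d le_eqVlt; apply/orP; left; apply/eqP; field; lra.
Qed.

Lemma tele_zero (E phi : R -> R) (a b K C : R) : a <= b -> 0 <= K -> 0 <= C ->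
 (forall s t, a <= s -> s <= t -> t <= b ->
    `|E t - E s| <= K * (t - s) ^+ 2 + C * (t - s) * (phi t - phi s)) ->
 E b = E a.
Proof.
move=> ab K0 C0 H.
set X := K * (b - a) ^+ 2 + C * (b - a) * (phi b - phi a).
have X0 : 0 <= X.
  have := H a b (lexx a) ab (lexx b); apply: le_trans; exact: normr_ge0.
apply/eqP; rewrite -subr_eq0 -normr_eq0; apply/eqP.
apply: le_anti; rewrite normr_ge0 andbT.
apply/negPn/negP; rewrite -ltNge => e0.
set e := `|E b - E a| in e0.
have Xe0 : 0 <= X / e by rewrite divr_ge0 // ltW.
set N := Num.Def.archi_bound (X / e).
have hN := archi_boundP Xe0.
have N0 : (0 < N)%N by rewrite -(ltr0n R); apply: le_lt_trans hN.
have := @tele_bound E phi a b K C N ab K0 C0 N0 H.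
rewrite -/X -/e ler_pdivlMr ?ltr0n // => h.
have : X < e * N%:R by rewrite mulrC -ltr_pdivrMr.
by rewrite ltNge h.
Qed.

End Tele.
Section Good.
Context {R : realType}.
Notation mu := (@lebesgue_measure R).
Variables a b : R.

Definition good (g : R -> R) := measurable_fun `[a, b] g /\
  exists M : R, forall x, x \in `[a, b] -> `|g x| <= M.

Lemma good_cst c : good (fun _ => c).
Proof. by split; [exact: measurable_cst | exists `|c|]. Qed.

Lemma goodD g1 g2 : good g1 -> good g2 -> good (fun x => g1 x + g2 x).
Proof.
move=> [m1 [M1 h1]] [m2 [M2 h2]]; split; first exact: measurable_realfun.measurable_funD.
exists (M1 + M2) => x xab; apply: le_trans (ler_normD _ _) _.
by apply: lerD; [exact: h1|exact: h2].
Qed.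

Lemma goodN g : good g -> good (fun x => - g x).
Proof.
move=> [m1 [M1 h1]]; split; first exact: measurableT_comp.
by exists M1 => x xab; rewrite normrN; exact: h1.
Qed.

Lemma goodM g1 g2 : good g1 -> good g2 -> good (fun x => g1 x * g2 x).
Proof.
move=> [m1 [M1 h1]] [m2 [M2 h2]]; split; first exact: measurable_realfun.measurable_funM.
exists (M1 * M2) => x xab; rewrite normrM.
by apply: ler_pM => //; [exact: h1|exact: h2].
Qed.

Lemma good_cont g : {within `[a, b], continuous g} -> a <= b -> good g.
Proof.
move=> gc ab; split.
  exact: subspace_continuous_measurable_fun.
have [c1 c1ab H1] := EVT_max ab gc.
have [c2 c2ab H2] := EVT_min ab gc.
exists (`|g c1| + `|g c2|) => x xab.
have := H1 _ xab; have := H2 _ xab.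
have := normr_ge0 (g c1); have := normr_ge0 (g c2).
have := ler_norm (g c1); have := ler_norm (g c2).
have := ler_norm (- g c2); rewrite normrN.
move=> *; case: (lerP 0 (g x)) => gx; [rewrite (ger0_norm gx) | rewrite (ltr0_norm gx)]; lra.
Qed.

Lemma good_int g (S : set R) : good g -> measurable S -> S `<=` `[a, b] ->
  mu.-integrable S (EFin \o g).
Proof.
move=> [mg [M hM]] mS Sab; apply/integrableP; split.
  by apply/measurable_EFinP; exact: measurable_funS mg.
apply: (@le_lt_trans _ _ (\int[mu]_(x in `[a, b]) `|(EFin \o g) x|)%E).
  apply: ge0_subset_integral => //.
  by apply: measurableT_comp => //; apply/measurable_EFinP.
apply: le_lt_trans.
  apply: (integral_le_bound (`|M|)%:E) => //.
    by apply/measurable_EFinP.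
  apply: aeW => x xab /=; rewrite lee_fin (le_trans (hM x _)) ?ler_norm //.
have Afin : (mu `[a, b] < +oo)%E.
  by rewrite lebesgue_measure_itv; case: ifP => _ //; rewrite -EFinB ltry.
by rewrite lte_mul_pinfty.
Qed.

End Good.
Arguments good_cst {R a b}.
Arguments goodD {R a b g1 g2}.
Arguments goodN {R a b g}.
Arguments goodM {R a b g1 g2}.
Arguments good_cont {R a b g}.
Arguments good_int {R a b g S}.

Section Mono.
Context {R : realType}.

Lemma mono_meas (g : R -> R) (a b : R) : a <= b ->
  (forall s t, a <= s -> s <= t -> t <= b -> g s <= g t) ->
  measurable_fun `[a, b] g.
Proof.
move=> ab gm.
pose c x := if x <= a then g a else if b <= x then g b else g x.
apply: (eq_measurable_fun c).
  move=> x; rewrite inE /= in_itv /= => /andP[ax xb]; rewrite /c.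
  case: (lerP x a) => xa; first by have -> : x = a by apply: le_anti; rewrite xa.
  case: (lerP b x) => bx //; by have -> : x = b by apply: le_anti; rewrite xb.
apply: nondecreasing_measurable => // x y xy; rewrite /c.
case: (lerP x a) => xa; case: (lerP y a) => ya.
- by [].
- case: (lerP b y) => by_; first exact: gm.
  by apply: gm => //; exact: ltW.
- lra.
- case: (lerP b x) => bx; case: (lerP b y) => by_.
  + by [].
  + lra.
  + by apply: gm => //; exact: ltW.
  + by apply: gm => //; exact: ltW.
Qed.

End Mono.

Section L.
Context {R : realType}.
Lemma lip_of_deriv (a b M1 : R) (h dh : R -> R) :
  (forall s, s \in `]a, b[ -> is_derive s 1 h (dh s)) ->
  {within `[a, b], continuous h} ->
  (forall x, a <= x -> x <= b -> `|dh x| <= M1) ->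
  forall s r, a <= s -> s <= r -> r <= b -> `|h r - h s| <= M1 * (r - s).
Proof.
move=> hd hc dhB s r ass sr rb.
have hd' : forall x, x \in `]s, r[ -> is_derive x 1 h (dh x).
  move=> x; rewrite !in_itv /= => /andP[sx xr]; apply: hd.
  rewrite in_itv /=; apply/andP; split.
    exact: le_lt_trans ass sx.
  exact: lt_le_trans xr rb.
have hc' : {within `[s, r], continuous h}.
  by apply: (continuous_subspaceW _ hc); apply: subset_itv; rewrite bnd_simp.
have [c cin ->] := @MVT_segment R h dh s r sr hd' hc'.
have rs0 : 0 <= r - s by rewrite subr_ge0.
rewrite normrM (ger0_norm rs0).
apply: ler_wpM2r => //.
move: cin; rewrite in_itv /= => /andP[sc cr]; apply: dhB.
  exact: le_trans ass sc.
exact: le_trans cr rb.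
Qed.
End L.

Section L2.
Context {R : realType}.
Notation mu := (@lebesgue_measure R).

Lemma Rint_split (g : R -> R) (a s t : R) : a <= s -> s <= t ->
  mu.-integrable `[a, t] (EFin \o g) ->
  \int[mu]_(x in `[a, t]) g x - \int[mu]_(x in `[a, s]) g x =
  \int[mu]_(x in `[s, t]) g x.
Proof.
move=> as_ st ig.
rewrite (@Rintegral_itvB R g (BLeft a) (BRight t) s ig) ?bnd_simp //.
rewrite Rintegral_itv_obnd_cbnd //.
apply: integrableS ig => //; apply: subset_itv; rewrite bnd_simp //.
Qed.

Lemma Rint_cst_itv (c s t : R) : s <= t ->
  \int[mu]_(x in `[s, t]) c = c * (t - s).
Proof.
move=> st; rewrite Rintegral_cst //= lebesgue_measure_itv /=.
case: ifP => [_ //|/negbT]; rewrite -leNgt lee_fin => ts.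
have -> : t = s by apply: le_anti; rewrite ts st.
by rewrite subrr mulr0.
Qed.

Lemma Rint_FTC (h dh : R -> R) (s t : R) : s < t ->
  {within `[s, t], continuous h} ->
  (forall x, x \in `]s, t[ -> is_derive x 1 h (dh x)) ->
  {within `[s, t], continuous dh} ->
  \int[mu]_(x in `[s, t]) dh x = h t - h s.
Proof.
move=> st hc hd dhc.
have dF : derivable_oo_LRcontinuous h s t.
  have [_ hl hr] := (continuous_within_itvP h st).1 hc.
  by split => // x xst; case: (hd x xst).
have F' : {in `]s, t[, h^`()%classic =1 dh}.
  by move=> x xst; rewrite derive1E; case: (hd x xst).
by rewrite /Rintegral (@continuous_FTC2 R dh h s t st dhc dF F').
Qed.
End L2.

Lemma good_norm {R : realType} (a b : R) (g : R -> R) : good a b g -> good a b (fun x => `|g x|).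
Proof.
move=> [m [M hM]]; split; first exact: measurableT_comp.
by exists M => x xab; rewrite normr_id; exact: hM.
Qed.

Section Core.
Context {R : realType}.
Notation mu := (@lebesgue_measure R).

Lemma core (a b : R) (h dh U phi : R -> R) :
  a < b ->
  {within `[a, b], continuous h} ->
  (forall s, s \in `]a, b[ -> is_derive s 1 h (dh s)) ->
  {within `[a, b], continuous dh} ->
  (forall s t, s \in `[a, b] -> t \in `[a, b] -> (t - s) * phi s <= U t - U s) ->
  \int[mu]_(x in `[a, b]) (dh x * U x + h x * phi x) = h b * U b - h a * U a.
Proof.
move=> ab hc hd dhc sg.
have ab' := ltW ab.
have inab s : a <= s -> s <= b -> s \in `[a, b].
  by move=> ? ?; rewrite in_itv /=; apply/andP.
have sand s t : a <= s -> s <= t -> t <= b ->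
    (t - s) * phi s <= U t - U s /\ U t - U s <= (t - s) * phi t.
  move=> ass st tb; split; first by apply: sg; apply: inab => //; lra.
  have := sg t s (inab _ (le_trans ass st) tb) (inab _ ass (le_trans st tb)).
  lra.
have phim s t : a <= s -> s <= t -> t <= b -> phi s <= phi t.
  move=> ass st tb; have [h1 h2] := sand s t ass st tb.
  case: (eqVneq s t) => [-> //|snt].
  have st' : 0 < t - s by rewrite subr_gt0 lt_neqAle snt st.
  have : 0 <= (t - s) * (phi t - phi s) by lra.
  by rewrite pmulr_rge0 // subr_ge0.
pose L : R := `|phi a| + `|phi b|.
have L0 : 0 <= L by rewrite addr_ge0.
have phiL x : a <= x -> x <= b -> `|phi x| <= L.
  move=> ax xb; have := phim a x (lexx a) ax xb; have := phim x b ax xb (lexx b).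
  have := ler_norm (phi b); have := ler_norm (- phi a); rewrite normrN.
  have := normr_ge0 (phi a); have := normr_ge0 (phi b).
  move=> *; case: (lerP 0 (phi x)) => px;
    [rewrite (ger0_norm px) | rewrite (ltr0_norm px)]; rewrite /L; lra.
have ULip s t : a <= s -> s <= t -> t <= b -> `|U t - U s| <= L * (t - s).
  move=> ass st tb; have [h1 h2] := sand s t ass st tb.
  have := phiL s ass (le_trans st tb); have := phiL t (le_trans ass st) tb.
  rewrite !ler_norml => /andP[p1 p2] /andP[q1 q2].
  apply/andP; split; nra.
have gphi : good a b phi.
  split; first exact: mono_meas.
  by exists L => x; rewrite in_itv /= => /andP[? ?]; exact: phiL.
have gU : good a b U.
  have gUL : good a b (fun x => U x + L * x).
    split.
      apply: mono_meas => // s t ass st tb.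
      have [h1 _] := sand s t ass st tb.
      have := phiL s ass (le_trans st tb); rewrite ler_norml => /andP[p1 p2].
      nra.
    exists (`|U a| + L * (b - a) + L * (`|a| + `|b|)) => x.
    rewrite in_itv /= => /andP[ax xb].
    have := ULip a x (lexx a) ax xb; rewrite ler_norml => /andP[u1 u2].
    have := normr_ge0 (U a); have := ler_norm (U a); have := ler_norm (- U a).
    rewrite normrN.
    have := normr_ge0 a; have := ler_norm a; have := ler_norm (- a); rewrite normrN.
    have := normr_ge0 b; have := ler_norm b; have := ler_norm (- b); rewrite normrN.
    move=> *; rewrite ler_norml; apply/andP; split; nra.
  have gLx : good a b (fun x => - (L * x)).
    apply: goodN; apply: goodM; first exact: good_cst.
    apply: good_cont ab'; apply: continuous_subspaceT => x; exact: cvg_id.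
  have := goodD gUL gLx; case=> m [M hM]; split.
    by apply: eq_measurable_fun m => x _ /=; rewrite addrK.
  by exists M => x xab; have := hM x xab; rewrite addrK.
have gh : good a b h := good_cont hc ab'.
have gdh : good a b dh := good_cont dhc ab'.
have [_ [M0' hM0]] := gh.
have [_ [M1' hM1]] := gdh.
pose M0 : R := `|M0'|; pose M1 : R := `|M1'|.
have M00 : 0 <= M0 by rewrite /M0 normr_ge0.
have M10 : 0 <= M1 by rewrite /M1 normr_ge0.
have hB x : a <= x -> x <= b -> `|h x| <= M0.
  by move=> ? ?; apply: le_trans (ler_norm _); apply: hM0; exact: inab.
have dhB x : a <= x -> x <= b -> `|dh x| <= M1.
  by move=> ? ?; apply: le_trans (ler_norm _); apply: hM1; exact: inab.
have hLip := @lip_of_deriv R a b M1 h dh hd hc dhB.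
have gint : forall f, good a b f -> forall S, measurable S -> S `<=` `[a, b] ->
    mu.-integrable S (EFin \o f).
  by move=> f gf S mS sS; exact: (@good_int R a b f S gf mS sS).
pose g x := dh x * U x + h x * phi x.
have gg : good a b g by apply: goodD; apply: goodM.
pose E t := h t * U t - \int[mu]_(x in `[a, t]) g x.
suff : E b = E a.
  rewrite /E set_itv1 Rintegral_set1 subr0 => Eb.
  rewrite -/(\int[mu]_(x in `[a, b]) g x); lra.
have K0 : 0 <= M1 * L by rewrite mulr_ge0.
apply: (@tele_zero R E phi a b (M1 * L) M0) => // s t ass st tb.
case: (eqVneq s t) => [<-|snt].
  by rewrite !subrr normr0 expr2 !(mulr0, mul0r) addr0.
have st' : s < t by rewrite lt_neqAle snt st.
have sub : `[s, t] `<=` `[a, b].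
  by apply: subset_itv; rewrite bnd_simp.
have mst : measurable (`[s, t] : set R) by [].
rewrite /E.
have -> : h t * U t - \int[mu]_(x in `[a, t]) g x -
    (h s * U s - \int[mu]_(x in `[a, s]) g x) =
    h t * U t - h s * U s - (\int[mu]_(x in `[a, t]) g x - \int[mu]_(x in `[a, s]) g x).
  by rewrite opprB addrA; lra.
rewrite Rint_split //; last first.
  apply: (@good_int R a b g `[a, t] gg) => //; apply: subset_itv; rewrite bnd_simp //.
have hd' : forall x, x \in `]s, t[ -> is_derive x 1 h (dh x).
  move=> x; rewrite !in_itv /= => /andP[sx xr]; apply: hd.
  rewrite in_itv /=; apply/andP; split.
    exact: le_lt_trans ass sx.
  exact: lt_le_trans xr tb.
have hc' : {within `[s, t], continuous h} by apply: (continuous_subspaceW _ hc).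
have dhc' : {within `[s, t], continuous dh} by apply: (continuous_subspaceW _ dhc).
have I1 := @Rint_FTC R h dh s t st' hc' hd' dhc'.
set P := \int[mu]_(x in `[s, t]) phi x.
have iphi : mu.-integrable `[s, t] (EFin \o phi) := gint _ gphi _ mst sub.
have idh : mu.-integrable `[s, t] (EFin \o dh) := gint _ gdh _ mst sub.
have P1 : (t - s) * phi s <= P.
  rewrite mulrC -Rint_cst_itv //; apply: le_Rintegral => //.
    exact: (gint _ (good_cst _) _ mst sub).
  move=> x /=; rewrite in_itv /= => /andP[sx xt]; apply: phim => //.
  exact: le_trans tb.
have P2 : P <= (t - s) * phi t.
  rewrite mulrC -Rint_cst_itv //; apply: le_Rintegral => //.
    exact: (gint _ (good_cst _) _ mst sub).
  move=> x /=; rewrite in_itv /= => /andP[sx xt]; apply: phim => //.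
  exact: le_trans ass sx.
pose q x := dh x * U t + h s * phi x.
have gq : good a b q by apply: goodD; apply: goodM => //; exact: good_cst.
have Qeq : \int[mu]_(x in `[s, t]) q x = (h t - h s) * U t + h s * P.
  rewrite /q RintegralD //.
  - by rewrite RintegralZr // RintegralZl // I1.
  - by apply: (gint _ _ _ mst sub); apply: goodM => //; exact: good_cst.
  - by apply: (gint _ _ _ mst sub); apply: goodM => //; exact: good_cst.
have ig : mu.-integrable `[s, t] (EFin \o g) := gint _ gg _ mst sub.
have iq : mu.-integrable `[s, t] (EFin \o q) := gint _ gq _ mst sub.
have gerr : forall x, x \in `[s, t] -> `|g x - q x| <= M1 * L * (t - s).
  move=> x; rewrite in_itv /= => /andP[sx xt].
  have ax : a <= x by exact: le_trans ass sx.
  have xb : x <= b by exact: le_trans xt tb.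
  have -> : g x - q x = dh x * (U x - U t) + (h x - h s) * phi x by rewrite /g /q; ring.
  apply: le_trans (ler_normD _ _) _; rewrite !normrM.
  have e1 : `|dh x| * `|U x - U t| <= M1 * (L * (t - x)).
    apply: ler_pM => //; first exact: dhB.
    by rewrite distrC; apply: ULip => //; exact: le_trans tb.
  have e2 : `|h x - h s| * `|phi x| <= M1 * (x - s) * L.
    apply: ler_pM => //; [exact: hLip | exact: phiL].
  have -> : M1 * L * (t - s) = M1 * (L * (t - x)) + M1 * (x - s) * L by ring.
  exact: lerD.
have Gerr : `|\int[mu]_(x in `[s, t]) g x - \int[mu]_(x in `[s, t]) q x| <=
    M1 * L * (t - s) * (t - s).
  rewrite -RintegralB //.
  have gq' : good a b (fun x => g x - q x) by apply: goodD => //; exact: goodN.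
  apply: le_trans (le_normr_Rintegral _ _) _ => //; first exact: (gint _ gq' _ mst sub).
  rewrite -Rint_cst_itv //; apply: le_Rintegral => //.
  - exact: (gint _ (@good_norm R a b _ gq') _ mst sub).
  - exact: (gint _ (good_cst _) _ mst sub).
have -> : h t * U t - h s * U s - \int[mu]_(x in `[s, t]) g x =
    h s * ((U t - U s) - P) +
    (\int[mu]_(x in `[s, t]) q x - \int[mu]_(x in `[s, t]) g x).
  by rewrite Qeq; ring.
apply: le_trans (ler_normD _ _) _; rewrite normrM addrC; apply: lerD.
  by rewrite distrC expr2 mulrA.
have [D1 D2] := sand s t ass st tb.
rewrite -mulrA; apply: ler_pM => //; first exact: hB (le_trans st tb).
rewrite ler_norml; apply/andP; split; lra.
Qed.
End Core.

Section D.
Context {R : realType}.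
Lemma dh_deriv (f df : R -> R) (s : R) : is_derive s 1 f (df s) ->
  is_derive s 1 (fun t => 2 * t * (1 - t) * f t)
    (2 * (1 - 2 * s) * f s + 2 * s * (1 - s) * df s).
Proof.
move=> hf.
have d1 : is_derive s 1 (fun t : R => 2 * t) 2.
  have := is_deriveZ 2 (is_derive_id s (1:R)).
  by move=> H; apply: is_derive_eq H _; rewrite /GRing.scale /= mulr1.
have d2 : is_derive s 1 (fun t : R => 1 - t) (-1).
  have := is_deriveB (is_derive_cst (1:R) s 1) (is_derive_id s (1:R)).
  by move=> H; apply: is_derive_eq H _; rewrite sub0r.
have d3 := is_deriveM d1 d2.
have d4 := is_deriveM d3 hf.
apply: is_derive_eq d4 _.
rewrite /GRing.scale /=.
change (2 * s * (1 - s) * df s + f s * (2 * s * -1 + (1 - s) * 2) = 2 * (1 - 2 * s) * f s + 2 * s * (1 - s) * df s); ring.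
Qed.
End D.
Section C.
Context {R : realType}.
Lemma within_contM (A : set R) (p g : R -> R) : continuous p ->
  {within A, continuous g} -> {within A, continuous (fun t => p t * g t)}.
Proof.
move=> pc gc x; apply: cvgM => //.
exact: (continuous_subspaceT pc).
exact: gc.
Qed.

Lemma within_contD (A : set R) (p g : R -> R) : {within A, continuous p} ->
  {within A, continuous g} -> {within A, continuous (fun t => p t + g t)}.
Proof. by move=> pc gc x; apply: cvgD; [exact: pc|exact: gc]. Qed.

Lemma cont_p1 : continuous (fun t : R => 2 * t * (1 - t)).
Proof.
move=> x; apply: cvgM; [apply: cvgM; [exact: cvg_cst|exact: cvg_id]|].
by apply: cvgB; [exact: cvg_cst|exact: cvg_id].
Qed.

Lemma cont_p2 : continuous (fun t : R => 2 * (1 - 2 * t)).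
Proof.
move=> x; apply: cvgM; first exact: cvg_cst.
apply: cvgB; first exact: cvg_cst.
by apply: cvgM; [exact: cvg_cst|exact: cvg_id].
Qed.
End C.

Section CG.
Context {R : realType}.
Lemma core_good (a b : R) (U phi : R -> R) : a < b ->
  (forall s t, s \in `[a, b] -> t \in `[a, b] -> (t - s) * phi s <= U t - U s) ->
  good a b U /\ good a b phi.
Proof.
move=> ab sg.
have ab' := ltW ab.
have inab s : a <= s -> s <= b -> s \in `[a, b].
  by move=> ? ?; rewrite in_itv /=; apply/andP.
have sand s t : a <= s -> s <= t -> t <= b ->
    (t - s) * phi s <= U t - U s /\ U t - U s <= (t - s) * phi t.
  move=> ass st tb; split; first by apply: sg; apply: inab => //; lra.
  have := sg t s (inab _ (le_trans ass st) tb) (inab _ ass (le_trans st tb)).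
  lra.
have phim s t : a <= s -> s <= t -> t <= b -> phi s <= phi t.
  move=> ass st tb; have [h1 h2] := sand s t ass st tb.
  case: (eqVneq s t) => [-> //|snt].
  have st' : 0 < t - s by rewrite subr_gt0 lt_neqAle snt st.
  have : 0 <= (t - s) * (phi t - phi s) by lra.
  by rewrite pmulr_rge0 // subr_ge0.
pose L : R := `|phi a| + `|phi b|.
have L0 : 0 <= L by rewrite addr_ge0.
have phiL x : a <= x -> x <= b -> `|phi x| <= L.
  move=> ax xb; have := phim a x (lexx a) ax xb; have := phim x b ax xb (lexx b).
  have := ler_norm (phi b); have := ler_norm (- phi a); rewrite normrN.
  have := normr_ge0 (phi a); have := normr_ge0 (phi b).
  move=> *; case: (lerP 0 (phi x)) => px;
    [rewrite (ger0_norm px) | rewrite (ltr0_norm px)]; rewrite /L; lra.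
have ULip s t : a <= s -> s <= t -> t <= b -> `|U t - U s| <= L * (t - s).
  move=> ass st tb; have [h1 h2] := sand s t ass st tb.
  have := phiL s ass (le_trans st tb); have := phiL t (le_trans ass st) tb.
  rewrite !ler_norml => /andP[p1 p2] /andP[q1 q2].
  apply/andP; split; nra.
have gphi : good a b phi.
  split; first exact: mono_meas.
  by exists L => x; rewrite in_itv /= => /andP[? ?]; exact: phiL.
have gU : good a b U.
  have gUL : good a b (fun x => U x + L * x).
    split.
      apply: mono_meas => // s t ass st tb.
      have [h1 _] := sand s t ass st tb.
      have := phiL s ass (le_trans st tb); rewrite ler_norml => /andP[p1 p2].
      nra.
    exists (`|U a| + L * (b - a) + L * (`|a| + `|b|)) => x.
    rewrite in_itv /= => /andP[ax xb].
    have := ULip a x (lexx a) ax xb; rewrite ler_norml => /andP[u1 u2].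
    have := normr_ge0 (U a); have := ler_norm (U a); have := ler_norm (- U a).
    rewrite normrN.
    have := normr_ge0 a; have := ler_norm a; have := ler_norm (- a); rewrite normrN.
    have := normr_ge0 b; have := ler_norm b; have := ler_norm (- b); rewrite normrN.
    move=> *; rewrite ler_norml; apply/andP; split; nra.
  have gLx : good a b (fun x => - (L * x)).
    apply: goodN; apply: goodM; first exact: good_cst.
    apply: good_cont ab'; apply: continuous_subspaceT => x; exact: cvg_id.
  have := goodD gUL gLx; case=> m [M hM]; split.
    by apply: eq_measurable_fun m => x _ /=; rewrite addrK.
  by exists M => x xab; have := hM x xab; rewrite addrK.
by [].
Qed.
End CG.


Theorem lemmaA4 (R : realType) (n : nat) (sl sh : R)
  (fp fm df : R -> R) (x : R -> (n.-1).-tuple R -> R) :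
  (2 <= n)%N ->
  (* signal support [sl, sh] inside [0, 1], nondegenerate *)
  0 <= sl -> sl < sh -> sh <= 1 ->
  (* fp, fm : densities of F_{+1}, F_{-1}, vanishing outside [sl, sh] *)
  measurable_fun setT fp -> measurable_fun setT fm ->
  (forall s, 0 <= fp s) -> (forall s, 0 <= fm s) ->
  (forall s, s \notin `[sl, sh] -> fp s = 0 /\ fm s = 0) ->
  (\int[lebesgue_measure]_(s in setT) (fp s)%:E = 1)%E ->
  (\int[lebesgue_measure]_(s in setT) (fm s)%:E = 1)%E ->
  (* F_{-1}, F_{+1} mutually absolutely continuous *)
  (forall A : set R, measurable A ->
     (\int[lebesgue_measure]_(s in A) (fp s)%:E = 0)%E <->
     (\int[lebesgue_measure]_(s in A) (fm s)%:E = 0)%E) ->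
  (* f = (fp + fm)/2 is positive on its support [sl, sh] *)
  (forall s, s \in `[sl, sh] -> 0 < (fp s + fm s) / 2) ->
  (* normalization: s = P[omega = +1 | s] *)
  (forall s, s \in `[sl, sh] -> fp s / (fp s + fm s) = s) ->
  (* f differentiable on [sl, sh] with continuous derivative df, |f'/f| bounded *)
  {within `[sl, sh], continuous (fun s => (fp s + fm s) / 2)} ->
  (forall s, s \in `]sl, sh[ -> is_derive s 1 (fun t => (fp t + fm t) / 2) (df s)) ->
  {within `[sl, sh], continuous df} ->
  (exists M : R, forall s, s \in `[sl, sh] -> `|df s / ((fp s + fm s) / 2)| <= M) ->
  (* x : a measurable mechanism for agent i, x(s_i, s_{-i}) in [0,1] *)
  measurable_fun setT (fun p : R * (n.-1).-tuple R => x p.1 p.2) ->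
  (forall si (t : (n.-1).-tuple R), 0 <= x si t <= 1) ->
  (* (P) *)
  (forall s, s \in `[sl, sh] -> 0 <= indirect_util fp fm x s) ->
  (* (IC) *)
  (forall s shat, s \in `[sl, sh] -> shat \in `[sl, sh] ->
     interim_util fp fm x s shat <= indirect_util fp fm x s) ->
  let f := fun s => (fp s + fm s) / 2 in
  let U := indirect_util fp fm x in
  exp_alloc fp fm x =
    - Rintegral lebesgue_measure `[sl, sh]
        (fun s => (3 * (1 - 2 * s) * f s + 2 * s * (1 - s) * df s) * U s)
    + 2 * sh * (1 - sh) * f sh * U sh
    - 2 * sl * (1 - sl) * f sl * U sl.
Proof.
move=> n2 sl0 slsh sh1 mfp mfm fp0 fm0 out ifp ifm ac fpos norm fc fd dfc bnd mx x01 P IC f U.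
pose A := cond_mech fp x; pose B := cond_mech fm x.
have fP s : s \in `[sl, sh] -> 0 < f s by move=> sI; exact: fpos.
have fpE s : s \in `[sl, sh] -> fp s = 2 * s * f s /\ fm s = 2 * (1 - s) * f s.
  move=> sI; have e := norm s sI; have p := fpos s sI.
  have hz : fp s + fm s != 0 by apply: lt0r_neq0; lra.
  have E1 : fp s = s * (fp s + fm s).
    by move/(congr1 (fun z => z * (fp s + fm s))): e; rewrite divfK.
  rewrite /f; split; first by rewrite {1}E1; field.
  have -> : 2 * (1 - s) * ((fp s + fm s) / 2) = (fp s + fm s) - s * (fp s + fm s) by field.
  by rewrite -E1; ring.
have IE s t : s \in `[sl, sh] -> interim_util fp fm x s t = s * A t - (1 - s) * B t.
  move=> sI; have [e1 e2] := fpE s sI; have fs := fP s sI.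
  rewrite /interim_util e1 e2 -/(A t) -/(B t); field; lra.
have UE s : s \in `[sl, sh] -> U s = s * A s - (1 - s) * B s.
  by move=> sI; rewrite /U /indirect_util IE.
pose phi t := A t + B t.
have sg s t : s \in `[sl, sh] -> t \in `[sl, sh] -> (t - s) * phi s <= U t - U s.
  move=> sI tI; have := IC t s tI sI; rewrite IE // -/(U t) (UE s sI) /phi => H; nra.
have Ihalf s t : s \in `]sl, sh[ -> s \in `[sl, sh].
  by rewrite !in_itv /= => /andP[? ?]; apply/andP; split; apply: ltW.
pose dh s := 2 * (1 - 2 * s) * f s + 2 * s * (1 - s) * df s.
have hc : {within `[sl, sh], continuous (fun t => 2 * t * (1 - t) * f t)}.
  exact: (@within_contM R _ (fun t : R => 2 * t * (1 - t)) f cont_p1 fc).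
have hd : forall s, s \in `]sl, sh[ -> is_derive s 1 (fun t => 2 * t * (1 - t) * f t) (dh s).
  by move=> s sI; apply: dh_deriv; exact: fd.
have dhc : {within `[sl, sh], continuous dh}.
  exact: (@within_contD R _ (fun t => 2 * (1 - 2 * t) * f t) (fun t => 2 * t * (1 - t) * df t) (@within_contM R _ (fun t : R => 2 * (1 - 2 * t)) f cont_p2 fc)
    (@within_contM R _ (fun t : R => 2 * t * (1 - t)) df cont_p1 dfc)).
have Hcore := @core R sl sh _ dh U phi slsh hc hd dhc sg.
have [gU gphi] := @core_good R sl sh U phi slsh sg.
have gf : good sl sh f := good_cont fc (ltW slsh).
have gdf : good sl sh df := good_cont dfc (ltW slsh).
have gint : forall g, good sl sh g ->
    lebesgue_measure.-integrable `[sl, sh] (EFin \o g).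
  by move=> g gg; exact: (@good_int R sl sh g `[sl, sh] gg).
pose X1 s := s * f s * (U s + (1 - s) * phi s).
pose X2 s := (1 - s) * f s * (s * phi s - U s).
have gX1 : good sl sh X1.
  apply: goodM; first by apply: goodM => //; apply: good_cont (ltW slsh);
    apply: continuous_subspaceT => z; exact: cvg_id.
  apply: goodD => //; apply: goodM => //.
  apply: goodD; [exact: good_cst | apply: goodN; apply: good_cont (ltW slsh);
    apply: continuous_subspaceT => z; exact: cvg_id].
have gid : good sl sh (fun z => z).
  by apply: good_cont (ltW slsh); apply: continuous_subspaceT => z; exact: cvg_id.
have gX2 : good sl sh X2.
  apply: goodM; first by apply: goodM => //; apply: goodD; [exact: good_cst|exact: goodN].
  by apply: goodD; [apply: goodM | apply: goodN].
have inD y : (y \in [set` `[sl, sh]]) = (y \in `[sl, sh]).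
  by apply/idP/idP; [move/set_mem | move=> H; apply: mem_set].

have e1 : Rintegral lebesgue_measure setT (fun si => fp si * cond_mech fp x si) =
    2 * \int[lebesgue_measure]_(s in `[sl, sh]) X1 s.
  rewrite -RintegralZl //; last exact: gint.
  rewrite [RHS]Rintegral_mkcond; apply: eq_Rintegral => y _; rewrite patchE inD.
  case: ifP => yI.
    have [-> _] := fpE y yI; rewrite -/(A y) /X1 /phi (UE y yI); ring.
  by have [-> _] := out y (negbT yI); rewrite mul0r.
have e2 : Rintegral lebesgue_measure setT (fun si => fm si * cond_mech fm x si) =
    2 * \int[lebesgue_measure]_(s in `[sl, sh]) X2 s.
  rewrite -RintegralZl //; last exact: gint.
  rewrite [RHS]Rintegral_mkcond; apply: eq_Rintegral => y _; rewrite patchE inD.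
  case: ifP => yI.
    have [_ ->] := fpE y yI; rewrite -/(B y) /X2 /phi (UE y yI); ring.
  by have [_ ->] := out y (negbT yI); rewrite mul0r.
rewrite /exp_alloc /cond_mech e1 e2 !mulrA mulVf ?pnatr_eq0 // !mul1r.
rewrite -RintegralD //; try exact: gint.
pose T s := (3 * (1 - 2 * s) * f s + 2 * s * (1 - s) * df s) * U s.
have p3 : good sl sh (fun s => 3 * (1 - 2 * s)) :=
  goodM (good_cst 3) (goodD (good_cst 1) (goodN (goodM (good_cst 2) gid))).
have p2 : good sl sh (fun s => 2 * (1 - 2 * s)) :=
  goodM (good_cst 2) (goodD (good_cst 1) (goodN (goodM (good_cst 2) gid))).
have p1 : good sl sh (fun s => 2 * s * (1 - s)) :=
  goodM (goodM (good_cst 2) gid) (goodD (good_cst 1) (goodN gid)).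
have gT : good sl sh T := goodM (goodD (goodM p3 gf) (goodM p1 gdf)) gU.
have gC : good sl sh (fun s => dh s * U s + 2 * s * (1 - s) * f s * phi s) :=
  goodD (goodM (goodD (goodM p2 gf) (goodM p1 gdf)) gU) (goodM (goodM p1 gf) gphi).
have -> : \int[lebesgue_measure]_(s in `[sl, sh]) (X1 s + X2 s) =
    \int[lebesgue_measure]_(s in `[sl, sh]) (dh s * U s + 2 * s * (1 - s) * f s * phi s)
    - \int[lebesgue_measure]_(s in `[sl, sh]) T s.
  rewrite -RintegralB //; try exact: gint.
  by apply: eq_Rintegral => y _; rewrite /X1 /X2 /T /dh; ring.
rewrite Hcore /T /U /indirect_util /interim_util /f; ring.
Qed.
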